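(* Let $G$ be a finite group of order $n$ and $\ell$ an integer. If the exponent of $G$ does not divide $\ell$, then $$\frac{|\{g\in G:g^\ell=1\}|}{n}\le 1-\frac1{\sqrt{2n}}.$$ *)

(* Defs.v *)
From mathcomp Require Import all_boot all_order all_algebra all_fingroup all_solvable.
From mathcomp Require Import all_reals.
Set Implicit Arguments. Unset Strict Implicit. Unset Printing Implicit Defensive.

Definition expgz (gT : finGroupType) (g : gT) (l : int) : gT :=
  match l with
  | Posz m => (g ^+ m)%g
  | Negz m => ((g ^+ m.+1)^-1)%g
  end.

(* Main.v *)
Require Import Defs.
From mathcomp Require Import all_boot all_order all_algebra all_fingroup all_solvable.
From mathcomp Require Import all_reals.
From mathcomp Require Import ring lra.
Import Order.TTheory GRing.Theory Num.Theory.
Local Open Scope ring_scope.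

Lemma expgz_eq1 (gT : finGroupType) (g : gT) (l : int) :
  (expgz g l == 1%g) = (g ^+ `|l|%N == 1%g)%g.
Proof. by case: l => m //=; rewrite invg_eq1. Qed.

Lemma count_nat (gT : finGroupType) (G : {group gT}) (m : nat) :
  ~~ (exponent G %| m)%N ->
  (#|G| <= 2 * #|[set g in G | g ^+ m != 1]%g| ^ 2)%N.
Proof.
move=> hne.
have [x xG xm] : exists2 x, x \in G & (x ^+ m != 1)%g.
  apply/exists_inP; apply: contraNT hne; rewrite negb_exists_in => /forall_inP H.
  by apply/exponentP => y yG; apply/eqP; rewrite -[_ == _]negbK H.
set T := [set g in G | g ^+ m != 1]%g.
set C := 'C_G[x]%g.
have hcl : (#|(x ^: G)%g| <= #|T|)%N.
  apply: subset_leq_card; apply/subsetP => y /imsetP [z zG ->].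
  by rewrite inE groupJ //= -conjXg conjg_eq1.
have hC : (#|C| <= 2 * #|T :&: C|)%N.
  set S := [set g in C | g ^+ m == 1]%g.
  have hU : C \subset (T :&: C) :|: S.
    apply/subsetP => g gC; move: (gC); rewrite /C inE => /andP [gG gc].
    by rewrite in_setU in_setI gC andbT /T /S in_set in_set gG gC /=; case: (_ == _).
  have hS : (#|S| <= #|T :&: C|)%N.
    rewrite -(@card_in_imset _ _ (fun g => g * x)%g S); last first.
      by move=> a b _ _ /mulIg.
    apply: subset_leq_card; apply/subsetP => y /imsetP [g gS ->].
    move: gS; rewrite /S in_set => /andP [gC gm].
    move: (gC); rewrite /C in_setI => /andP [gG gx].
    have cgx : commute g x by apply/cent1P.
    rewrite in_setI; apply/andP; split.
      by rewrite /T in_set groupM //= expgMn // (eqP gm) mul1g.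
    rewrite /C in_setI groupM //=; apply/cent1P.
    by rewrite /commute mulgA cgx -mulgA.
  apply: leq_trans (subset_leq_card hU) _.
  by apply: leq_trans (leq_card_setU _ _) _; rewrite mul2n -addnn leq_add2l.
have hTC : (#|T :&: C| <= #|T|)%N by apply: subset_leq_card; apply: subsetIl.
have hn : #|G| = (#|C| * #|(x ^: G)%g|)%N.
  by rewrite -index_cent1 Lagrange // subsetIl.
rewrite hn expnS expn1 mulnA.
apply: leq_mul; first by apply: leq_trans hC _; rewrite leq_mul2l hTC orbT.
exact: hcl.
Qed.

Theorem theorem2p9 (R : realType) (gT : finGroupType) (G : {group gT}) (l : int) :
  ~~ ((exponent G)%:Z %| l)%Z ->
  (#|[set g in G | expgz g l == 1%g]|%:R / #|G|%:R : R)
    <= 1 - 1 / Num.sqrt (2 * #|G|%:R).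
Proof.
rewrite dvdzE absz_nat => hne.
have key := @count_nat _ _ _ hne.
set m := `|l|%N in hne key.
set T := [set g in G | g ^+ m != 1]%g in key.
have hsplit : (#|[set g in G | expgz g l == 1%g]| + #|T|)%N = #|G|.
  rewrite -cardsUI.
  have -> : [set g in G | expgz g l == 1%g] :&: T = set0.
    by apply/setP => g; rewrite /T !inE expgz_eq1; case: (_ == _); rewrite ?andbF.
  rewrite cards0 addn0; apply: eq_card => g; rewrite /T !inE expgz_eq1.
  by case: (g \in G); case: (_ == _).
set n := #|G| in hsplit key *.
set t := #|T| in hsplit key *.
set s := #|[set g in G | expgz g l == 1%g]| in hsplit *.
have n0 : (0 < n)%N by rewrite /n cardG_gt0.
have nR : (0 : R) < n%:R by rewrite ltr0n.
have keyR : (n%:R : R) <= 2 * t%:R ^+ 2.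
  by rewrite -natrX -natrM ler_nat.
set q := Num.sqrt (2 * n%:R : R).
have q0 : 0 < q by rewrite sqrtr_gt0 mulr_gt0.
have qq : q ^+ 2 = 2 * n%:R by rewrite sqr_sqrtr // mulr_ge0 // ltW.
have qt : q <= 2 * t%:R.
  have -> : 2 * t%:R = Num.sqrt ((2 * t%:R) ^+ 2) :> R.
    by rewrite sqrtr_sqr ger0_norm // mulr_ge0.
  rewrite ler_sqrt; last by rewrite sqr_ge0.
  rewrite exprMn; lra.
have -> : (s%:R : R) = n%:R - t%:R by rewrite -hsplit natrD; ring.
have h1 : 1 / q = q / (2 * n%:R).
  rewrite -qq; field; by rewrite gt_eqF.
rewrite h1 mulrBl divff ?gt_eqF //.
rewrite lerD2l lerN2 ler_pdivrMr ?mulr_gt0 //.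
rewrite mulrC mulrA ler_pdivlMr //.
have : 0 <= t%:R :> R by rewrite ler0n.
nra.
Qed.
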